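(* Let $W(\omega_1)$ be the space of all countable ordinals with the order topology. If $Y$ is an infinite Tychonoff space of countable weight that is a continuous image of $W(\omega_1)$, then $Y$ is not homogeneous.
   Context: A space $Y$ is homogeneous if for any $y,z\in Y$ there is a homeomorphism of $Y$ onto itself mapping $y$ to $z$. *)

(* Defs.v *)
From HB Require Import structures.
From mathcomp Require Import all_boot all_order all_algebra.
From mathcomp Require Import all_classical all_reals all_analysis.
Set Implicit Arguments. Unset Strict Implicit. Unset Printing Implicit Defensive.
Import Order.TTheory GRing.Theory Num.Theory.
Local Open Scope classical_set_scope.
Local Open Scope order_scope.

(* T (a totally ordered type with its order topology) is order-isomorphic to
   omega_1, i.e. T is (a copy of) the space W(omega_1) of countable ordinals:
   the order is a well-order, T is uncountable, and every proper initial
   segment is countable. *)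
Definition is_W_omega1 {d} (T : orderTopologicalType d) : Prop :=
  [/\ (forall A : set T, A !=set0 -> exists2 a, A a & forall b, A b -> a <= b),
      ~ countable [set: T]
    & forall x : T, countable [set y : T | y < x]].

Definition tychonoff_space (Y : topologicalType) : Prop :=
  completely_regular_space Y /\ accessible_space Y.

Definition homogeneous (Y : topologicalType) : Prop :=
  forall y z : Y, exists f g : Y -> Y,
    [/\ continuous f, continuous g, cancel f g, cancel g f & f y = z].

(* Main.v *)
Require Import Defs.
From HB Require Import structures.
From mathcomp Require Import all_boot all_order all_algebra.
From mathcomp Require Import all_classical all_reals all_analysis.
From mathcomp Require Import Rstruct.
From mathcomp Require Import zify.
Import Order.TTheory.
Local Open Scope classical_set_scope.

Lemma countableU_ T (A B : set T) : countable A -> countable B -> countable (A `|` B).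
Proof.
move=> cA cB.
have -> : A `|` B = \bigcup_(b in [set: bool]) (if b then A else B).
  apply/seteqP; split => x.
    by case=> ?; [exists true | exists false].
  by case=> -[] _ ?; [left|right].
by apply: bigcup_countable => [|[]]//; exact: countableP.
Qed.

Section W.
Local Open Scope order_scope.
Context {d : Order.disp_t} {W : orderTopologicalType d}.

Lemma bound_countable (I : Type) (S : set I) (h : I -> W) :
  is_W_omega1 W -> countable S -> exists b, forall i, S i -> h i < b.
Proof.
case=> _ unc cnt cS.
have cU : countable (\bigcup_(i in S) [set y | y <= h i]).
  apply: bigcup_countable => // i _.
  have -> : [set y | y <= h i] = [set y | y < h i] `|` [set h i].
    apply/seteqP; split => y /=.
      by rewrite le_eqVlt => /orP[/eqP->|]; [right|left].
    by case=> [/ltW|->].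
  exact: countableU_ (cnt _) (countable1 _).
have [b Ub] : exists b, ~ (\bigcup_(i in S) [set y | y <= h i]) b.
  apply/existsNP => allU; apply: unc.
  by have -> : [set: W] = \bigcup_(i in S) [set y | y <= h i] by apply/seteqP; split => x // _; exact: allU.
exists b => i Si; rewrite ltNge; apply/negP => le; apply: Ub; by exists i.
Qed.

Lemma nbhs_left (s : W) (N : set W) : nbhs s N ->
  (exists2 t, t < s & forall z, t < z -> z <= s -> N z) \/ (forall z, z <= s -> N z).
Proof.
rewrite itv_nbhsE => -[[p q] [oi si] sub].
move: si; rewrite itv_boundlr => /andP[ps sq].
have up : forall z, z <= s -> (BRight z <= q)%O.
  by move=> z zs; apply: le_trans sq; rewrite bnd_simp.
case: p oi ps sub => [b t|b] oi ps sub.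
- have bf := itv_open_ends_lside oi; subst b.
  left; exists t; first by move: ps; rewrite bnd_simp.
  move=> z tz zs; apply: sub; rewrite /= itv_boundlr (up _ zs) andbT bnd_simp //.
- have bt := itv_open_ends_linfty oi; subst b.
  right => z zs; apply: sub; rewrite /= itv_boundlr (up _ zs) andbT //.
Qed.

Lemma cluster_seq (x : nat -> W) : is_W_omega1 W -> exists s : W,
  (forall M, exists2 n, (M <= n)%N & x n <= s) /\
  (forall t, t < s -> exists M, forall n, (M <= n)%N -> t < x n).
Proof.
move=> HW; have [b xb] := bound_countable nat [set: nat] x HW (countableP [set: nat]).
case: (HW) => wf _ _.
set A := [set s | forall M, exists2 n, (M <= n)%N & x n <= s].
have [s As mins] : exists2 s, A s & forall c, A c -> s <= c.
  by apply: wf; exists b => M; exists M => //; exact/ltW/xb.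
exists s; split => // t ts.
have nAt : ~ A t by move=> /mins; rewrite leNgt ts.
have [M HM] : exists M, ~ exists2 n, (M <= n)%N & x n <= t.
  by apply/existsNP.
exists M => n Mn; rewrite ltNge; apply/negP => xt; apply: HM; by exists n.
Qed.

Lemma cluster_nbhs (x : nat -> W) : is_W_omega1 W -> exists s : W,
  forall N, nbhs s N -> forall M, exists2 n, (M <= n)%N & N (x n).
Proof.
move=> HW; have [s [Hinf Hfin]] := cluster_seq x HW.
exists s => N /nbhs_left [[t ts tN]|sN] M.
- have [M' HM'] := Hfin t ts.
  have [n Mn xs] := Hinf (maxn M M').
  exists n; first by apply: leq_trans Mn; exact: leq_maxl.
  apply: tN xs; apply: HM'; apply: leq_trans Mn; exact: leq_maxr.
- have [n Mn xs] := Hinf M; exists n => //; exact: sN.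
Qed.

Lemma mono_limit (x : nat -> W) : is_W_omega1 W -> (forall n, x n <= x n.+1) ->
  exists s : W, forall N, nbhs s N -> exists M, forall n, (M <= n)%N -> N (x n).
Proof.
move=> HW xi; have [s [Hinf Hfin]] := cluster_seq x HW.
have xs : forall n, x n <= s.
  move=> n; have [m nm xms] := Hinf n; apply: le_trans xms.
  apply: (homo_leq (r := fun a b => a <= b)) nm.
  - by move=> ?; exact: lexx.
  - by move=> y a c; exact: le_trans.
  - exact: xi.
exists s => N /nbhs_left [[t ts tN]|sN].
- have [M' HM'] := Hfin t ts; exists M' => n Mn; exact: tN (HM' _ Mn) (xs n).
- by exists 0%N => n _; exact: sN.
Qed.

End W.

Lemma open_nbhs_pt {T : topologicalType} {V : set T} {p : T} : open V -> V p -> nbhs p V.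
Proof. by move=> oV Vp; exact: open_nbhs_nbhs. Qed.

Theorem mainTheorem3 (d : Order.disp_t) (W : orderTopologicalType d)
  (Y : topologicalType) (f : W -> Y) :
  is_W_omega1 W ->
  tychonoff_space Y ->
  @second_countable Y ->
  infinite_set [set: Y] ->
  continuous f ->
  f @` [set: W] = [set: Y] ->
  ~ homogeneous Y.
Proof.
move=> HW [crY T1Y] [B cB basB] infY fc fsurj homog.
have regY : regular_space Y := @completely_regular_regular Rdefinitions.R Y crY.
have fcN : forall s N, nbhs (f s) N -> nbhs s (f @^-1` N).
  by move=> s N HN; exact: fc s N HN.
have surj : forall y, exists w, f w = y.
  by move=> y; have : [set: Y] y by []; rewrite -fsurj => -[w _ <-]; exists w.
have [y0 _] := infinite_setN0 infY.
have [w0 _] := surj y0.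
have hex : forall U : set Y, exists hU : W, (forall z, U (f z) -> (z < hU)%O) \/
     ~ exists c, forall z, U (f z) -> (z < c)%O.
  move=> U.
  case: (pselect (exists c, forall z, U (f z) -> (z < c)%O)) => [[c Hc]|nb].
    by exists c; left.
  by exists w0; right.
have [h hP] := choice hex.
have [be Hbe] := bound_countable (set Y) B h HW cB.
have unb : forall U, B U -> forall x, (be <= x)%O -> U (f x) ->
    forall c, exists z, (c <= z)%O /\ U (f z).
  move=> U BU x bx Ux c.
  case: (hP U) => [Hb|nb].
    have := lt_le_trans (lt_trans (Hb x Ux) (Hbe U BU)) bx.
    by rewrite ltxx.
  apply/not_existsP => Hn; apply: nb; exists c => z Uz.
  rewrite ltNge; apply/negP => cz; exact: (Hn z).
have const : forall x, (be <= x)%O -> f x = f be.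
  move=> x bx; case: (pselect (f x = f be)) => // ne; exfalso.
  have cb : closed [set f be] by exact: accessible_closed_set1.
  have nA : nbhs (f x) (~` [set f be]).
    by apply: open_nbhs_pt => //; exact: closed_openC.
  have [V nV clV] := regY (f x) _ nA.
  have nA2 : nbhs (f be) (~` closure V).
    apply: open_nbhs_pt; first by apply: closed_openC; exact: closed_closure.
    by move=> /clV; apply.
  have [V2 nV2 clV2] := regY (f be) _ nA2.
  have [U1 [BU1 U1x] U1V] := basB.2 (f x) _ nV.
  have [U2 [BU2 U2b] U2V] := basB.2 (f be) _ nV2.
  have Gex : forall p : W * bool, exists g : W, (p.1 <= g)%O /\
      (if p.2 then U1 else U2) (f g).
    move=> -[z [|]] /=.
      by have [w [zw Uw]] := unb U1 BU1 x bx U1x z; exists w.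
    by have [w [zw Uw]] := unb U2 BU2 be (lexx _) U2b z; exists w.
  have [G HG] := choice Gex.
  pose p := fix p n := if n is m.+1 then G (p m, odd m) else x.
  have pinc : forall n, (p n <= p n.+1)%O by move=> n; exact: (HG (p n, odd n)).1.
  have [s Hs] := mono_limit p HW pinc.
  have inclo : forall (U V : set Y), U `<=` V -> (forall M, exists n, (M <= n)%N /\ U (f (p n))) ->
      closure V (f s).
    move=> U V0 UV HU N nN; have [M HM] := Hs _ (fcN _ _ nN).
    have [n [Mn Un]] := HU M; exists (f (p n)); split; [exact: UV | exact: HM].
  have c1 : closure V (f s).
    apply: (inclo U1) => // M; exists (M.*2).+2; split.
      by rewrite -addnn; lia.
    by have := (HG (p (M.*2).+1, odd (M.*2).+1)).2; rewrite /= odd_double.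
  have c2 : closure V2 (f s).
    apply: (inclo U2) => // M; exists (M.*2).+1; split.
      by rewrite -addnn; lia.
    by have := (HG (p (M.*2), odd (M.*2))).2; rewrite /= odd_double.
  by have := clV2 _ c2.
have cY : countable [set: Y].
  have -> : [set: Y] = f @` [set z | (z < be)%O] `|` [set f be].
    apply/seteqP; split => y // _; have [w <-] := surj y.
    case: (leP be w) => [bw|wb]; [right; exact: const | left; by exists w].
  apply: countableU_ (countable1 _).
  apply: card_le_trans (card_image_le f _) _; by case: HW => _ _ /(_ be).
have [io ioinj] : exists io : Y -> nat, {in [set: Y] &, injective io} by apply/countable_injP.
have ioinj' : forall a b, io a = io b -> a = b by move=> a b; apply: ioinj; rewrite inE.
have iounb : forall N, exists y, (N <= io y)%N.
  move=> N; apply/not_existsP => Hn; apply: infY.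
  have : finite_set (io @` [set: Y]).
    apply: (sub_finite_set _ (finite_II N)) => _ [y _ <-] /=.
    by rewrite ltnNge; apply/negP => /Hn.
  by rewrite (eq_finite_set (inj_card_eq ioinj)).
have xex : forall n, exists w : W, (n <= io (f w))%N.
  move=> n; have [y Hy] := iounb n; have [w Hw] := surj y.
  by exists w; rewrite Hw.
have [xs Hxs] := choice xex.
have [s Hs] := cluster_nbhs xs HW.
have NI : forall N, nbhs (f s) N -> exists2 q, N q & q <> f s.
  move=> N nN; have [n Mn Nn] := Hs _ (fcN _ _ nN) (io (f s)).+1.
  exists (f (xs n)) => // e; have := leq_trans Mn (Hxs n).
  by rewrite e ltnn.
have allNI : forall (z : Y) (N : set Y), nbhs z N -> exists2 q, N q & q <> z.
  move=> z N nN; case: (pselect (exists2 q, N q & q <> z)) => // Hn; exfalso.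
  have [fh [gh [fhc _ fg _ fhs]]] := homog (f s) z.
  have nN' : nbhs (f s) (fh @^-1` N) by rewrite -fhs in nN; exact: fhc _ _ nN.
  have [q Nq qs] := NI _ nN'.
  have fhq : fh q = z.
    by case: (pselect (fh q = z)) => // ne; exfalso; apply: Hn; exists (fh q).
  by apply: qs; rewrite -(fg q) -(fg (f s)) fhs fhq.
(* Step 7: Baire *)
have closedio : forall n, closed [set w : Y | io w = n].
  move=> n; case: (pselect (exists w0, io w0 = n)) => [[w1 Hw1]|nw].
    have -> : [set w : Y | io w = n] = [set w1].
      apply/seteqP; split => w /=; last by move=> ->.
      by move=> Hw; apply: ioinj'; rewrite Hw Hw1.
    exact: accessible_closed_set1.
  have -> : [set w : Y | io w = n] = set0.
    by apply/seteqP; split => w //= Hw; apply: nw; exists w.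
  exact: closed0.
have Gsex : forall nV : nat * set Y, exists V' : set Y, open nV.2 -> nV.2 !=set0 ->
    [/\ open V', V' !=set0, closure V' `<=` nV.2 & forall y, closure V' y -> io y <> nV.1].
  move=> [n V] /=.
  case: (pselect (open V /\ V !=set0)) => [[oV [p Vp]]|nV]; last first.
    by exists set0 => oV nV0; exfalso; apply: nV.
  have [q Vq qp] := allNI p V (open_nbhs_pt oV Vp).
  have [r [Vr ior]] : exists r, V r /\ io r <> n.
    case: (pselect (io p = n)) => [iop|iop]; last by exists p.
    exists q; split => // ioq; apply: qp; apply: ioinj'; by rewrite ioq iop.
  have oO : open (V `&` ~` [set w : Y | io w = n]).
    by apply: openI => //; apply: closed_openC.
  have nO := open_nbhs_pt oO (conj Vr ior).
  have [V2 nV2 clV2] := regY r _ nO.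
  exists (interior V2) => _ _; split.
  - exact: open_interior.
  - by exists r.
  - by move=> y /(closureS (@interior_subset _ V2)) /clV2 [].
  - by move=> y /(closureS (@interior_subset _ V2)) /clV2 [].
have [Gs HGs] := choice Gsex.
pose vs := fix vs n := if n is m.+1 then Gs (m, vs m) else [set: Y].
have vsP : forall n, open (vs n) /\ vs n !=set0.
  elim=> [|n [on nn]]; first by split; [exact: openT | exists y0].
  by have [] := HGs (n, vs n) on nn.
have vsS : forall n, vs n.+1 `<=` vs n.
  move=> n y Hy; have [on nn] := vsP n.
  have [_ _ cl _] := HGs (n, vs n) on nn.
  by apply: cl; exact: subset_closure.
have vsD : forall m n, (m <= n)%N -> vs n `<=` vs m.
  move=> m n mn; apply: (homo_leq (r := fun A B : set Y => B `<=` A)) mn.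
  - by move=> ?.
  - by move=> A0 A1 A2 h1 h2 y /h2 /h1.
  - exact: vsS.
have x2ex : forall n, exists w : W, vs n (f w).
  move=> n; have [_ [y Hy]] := vsP n; have [w Hw] := surj y.
  by exists w; rewrite Hw.
have [x2 Hx2] := choice x2ex.
have [s2 Hs2] := cluster_nbhs x2 HW.
set n0 := io (f s2).
have [on nn] := vsP n0.
have [_ _ _ Hio] := HGs (n0, vs n0) on nn.
apply: (Hio (f s2)) => //= N nN.
have [m Mm Nm] := Hs2 _ (fcN _ _ nN) n0.+1.
exists (f (x2 m)); split => //.
exact: vsD Mm _ (Hx2 m).
Qed.
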